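(* Let $b,\beta,\beta'\in\mathbb{R}$, $\gamma>0$, $\gamma'\ge0$ and $c\ge-\gamma$. Then \[ \mu_{b,c,\beta,\gamma}\rhd\mu_{b+\beta,\,c+\gamma,\,\beta',\,\gamma'}=\mu_{b,c,\beta+\beta',\gamma+\gamma'}. \] In particular, for normalized free Meixner distributions $\mu_{b,c}=\mu_{b,c,0,1}$ with $c\ge-1$, $\mu_{b,c}\rhd\mu_{b,c+1}=\mu_{b,c}^{\boxplus2}$.
   Context: For real $b,c,\beta,\gamma$ with $\gamma\ge0$ and $c+\gamma\ge0$, the free Meixner distribution $\mu_{b,c,\beta,\gamma}$ is the compactly supported probability measure on $\mathbb{R}$ with Jacobi parameters $(\beta_0,\beta_1,\beta_2,\dots)=(\beta,b+\beta,b+\beta,\dots)$ and $(\gamma_0,\gamma_1,\dots)=(\gamma,c+\gamma,c+\gamma,\dots)$, i.e. whose Cauchy transform $G(z)=\int\frac{d\mu(x)}{z-x}$ has the continued fraction expansion $1/(z-\beta_0-\gamma_0/(z-\beta_1-\gamma_1/(z-\beta_2-\cdots)))$. For probability measures $\mu,\nu$ with $F_\mu=1/G_\mu$, the monotone convolution $\mu\rhd\nu$ is the probability measure with $F_{\mu\rhd\nu}=F_\mu\circ F_\nu$. $\boxplus$ is free convolution. *)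

(* Defs.v *)
From Stdlib Require Import Reals.
Open Scope R_scope.

Record C := mkC { Re : R; Im : R }.
Definition Cadd (z w : C) : C := mkC (Re z + Re w) (Im z + Im w).
Definition Csub (z w : C) : C := mkC (Re z - Re w) (Im z - Im w).
Definition Cmul (z w : C) : C :=
  mkC (Re z * Re w - Im z * Im w) (Re z * Im w + Im z * Re w).
Definition RtoC (x : R) : C := mkC x 0.
Definition Cnorm2 (z : C) : R := Re z * Re z + Im z * Im z.
Definition Cinv (z : C) : C := mkC (Re z / Cnorm2 z) (- Im z / Cnorm2 z).
Definition Cnorm (z : C) : R := sqrt (Cnorm2 z).

(** Jacobi parameters of the free Meixner distribution mu_{b,c,beta,gamma}:
    (beta, b+beta, b+beta, ...) and (gamma, c+gamma, c+gamma, ...). *)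
Definition jac_beta (b beta : R) (n : nat) : R :=
  match n with O => beta | S _ => b + beta end.
Definition jac_gamma (c gamma : R) (n : nat) : R :=
  match n with O => gamma | S _ => c + gamma end.

(** Truncated continued fraction starting at level k, of depth n:
    cfd 0 k z = 1/(z - a_k),
    cfd (n+1) k z = 1/(z - a_k - g_k * cfd n (k+1) z). *)
Fixpoint cfd (a g : nat -> R) (n k : nat) (z : C) : C :=
  match n with
  | O => Cinv (Csub z (RtoC (a k)))
  | S m => Cinv (Csub (Csub z (RtoC (a k))) (Cmul (RtoC (g k)) (cfd a g m (S k) z)))
  end.

(** A "Cauchy-transform relation": [G z g] means G(z) = g. *)
Definition CTrel := C -> C -> Prop.

(** The Cauchy transform of the measure with Jacobi parameters (a,g), defined
    as the value of the continued fraction, i.e. the limit of its convergents. *)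
Definition cf_value (a g : nat -> R) : CTrel := fun z w =>
  forall eps : R, 0 < eps ->
    exists N : nat, forall n : nat, (N <= n)%nat -> Cnorm (Csub (cfd a g n 0 z) w) < eps.

Definition G_fm (b c beta gamma : R) : CTrel :=
  cf_value (jac_beta b beta) (jac_gamma c gamma).

(** Monotone convolution: mu3 = mu1 |> mu2 iff F3 = F1 o F2 on the upper half
    plane, where F = 1/G; equivalently G3(z) = G1(1/G2(z)). *)
Definition monotone_conv_eq (G1 G2 G3 : CTrel) : Prop :=
  forall z : C, 0 < Im z ->
    exists g2 g1 : C, G2 z g2 /\ G1 (Cinv g2) g1 /\ G3 z g1.

(** Free convolution (compactly supported case), via Voiculescu's R-transform:
    mu3 = mu1 [+] mu2 iff there are bounded functions R1, R2 on a punctured disc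
    around 0 with G1(R1(w)+1/w) = w, G2(R2(w)+1/w) = w and
    G3(R1(w)+R2(w)+1/w) = w there (so R3 = R1 + R2). *)
Definition free_conv_eq (G1 G2 G3 : CTrel) : Prop :=
  exists r M : R, 0 < r /\
  exists R1 R2 : C -> C,
    forall w : C, 0 < Cnorm w < r ->
      Cnorm (R1 w) <= M /\ Cnorm (R2 w) <= M /\
      G1 (Cadd (R1 w) (Cinv w)) w /\
      G2 (Cadd (R2 w) (Cinv w)) w /\
      G3 (Cadd (Cadd (R1 w) (R2 w)) (Cinv w)) w.

(* Main.v *)
Require Import Defs.
From Stdlib Require Import Reals.
Open Scope R_scope.
From Stdlib Require Import Lra Psatz ClassicalEpsilon.
Require Coquelicot.Coquelicot.

Module W.
Import Coquelicot.Coquelicot.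

Definition toC (z : Defs.C) : C := (Defs.Re z, Defs.Im z).
Definition ofC (z : C) : Defs.C := Defs.mkC (fst z) (snd z).
Lemma toC_ofC z : toC (ofC z) = z. Proof. destruct z; reflexivity. Qed.
Lemma toC_sub z w : toC (Defs.Csub z w) = (toC z - toC w)%C.
Proof. unfold toC, Defs.Csub, Cminus, Cplus, Copp; simpl. f_equal; ring. Qed.
Lemma toC_add z w : toC (Defs.Cadd z w) = (toC z + toC w)%C.
Proof. unfold toC, Defs.Cadd, Cplus; simpl. f_equal; ring. Qed.
Lemma toC_mul z w : toC (Defs.Cmul z w) = (toC z * toC w)%C.
Proof. unfold toC, Defs.Cmul, Cmult; simpl. f_equal; ring. Qed.
Lemma toC_inv z : toC (Defs.Cinv z) = Cinv (toC z).
Proof. unfold toC, Defs.Cinv, Cinv, Defs.Cnorm2; simpl. f_equal; unfold Rdiv; f_equal; f_equal; ring. Qed.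
Lemma toC_R x : toC (Defs.RtoC x) = RtoC x.
Proof. reflexivity. Qed.
Lemma Cnorm_toC z : Defs.Cnorm z = Cmod (toC z).
Proof. unfold Defs.Cnorm, Cmod, Defs.Cnorm2, toC; simpl. f_equal; ring. Qed.

Fixpoint it (a g : R) (x : C) (n : nat) : C :=
  match n with O => 0%C | S m => Cinv (x - RtoC a - RtoC g * it a g x m)%C end.

Lemma cfd_tail b c beta gamma z : forall n k,
  toC (cfd (jac_beta b beta) (jac_gamma c gamma) n (S k) z) = it (b+beta) (c+gamma) (toC z) (S n).
Proof.
  induction n; intros k; simpl cfd.
  - rewrite toC_inv, toC_sub, toC_R. simpl. f_equal. ring.
  - rewrite toC_inv, !toC_sub, toC_mul, !toC_R, IHn. reflexivity.
Qed.

Lemma cfd_top b c beta gamma z n :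
  toC (cfd (jac_beta b beta) (jac_gamma c gamma) n 0 z) =
  Cinv (toC z - RtoC beta - RtoC gamma * it (b+beta) (c+gamma) (toC z) n)%C.
Proof.
  destruct n; simpl cfd.
  - rewrite toC_inv, toC_sub, toC_R. simpl. f_equal. ring.
  - rewrite toC_inv, !toC_sub, toC_mul, !toC_R, cfd_tail. reflexivity.
Qed.


Definition conv (s : nat -> C) (l : C) := forall eps, 0 < eps ->
  exists N, forall n, (N <= n)%nat -> Cmod (s n - l)%C < eps.

Lemma im_le_Cmod c : Rabs (Im c) <= Cmod c.
Proof.
  rewrite <- sqrt_Rsqr_abs. unfold Cmod. apply sqrt_le_1_alt. unfold Rsqr, Im. simpl. nra.
Qed.

Lemma Cmod_rev x y : Cmod x - Cmod y <= Cmod (x - y)%C.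
Proof.
  assert (H := Cmod_triangle (x - y)%C y).
  replace (x - y + y)%C with x in H by ring. lra.
Qed.

Lemma inv_mul_fix (u P : C) : u <> 0%C -> P = Cinv u -> (P * u = 1)%C.
Proof. intros Hu ->. apply Cinv_l. exact Hu. Qed.

Lemma fix_step a g x P n :
  (x - RtoC a - RtoC g * P <> 0)%C -> P = Cinv (x - RtoC a - RtoC g * P)%C ->
  (x - RtoC a - RtoC g * it a g x n <> 0)%C ->
  (it a g x (S n) - P = RtoC g * (it a g x n - P) * it a g x (S n) * P)%C.
Proof.
  intros HP EP Hn. simpl it.
  set (t := it a g x n) in *.
  assert (E1 : (P * (x - RtoC a - RtoC g * P) = 1)%C) by (apply inv_mul_fix; auto).
  assert (E2 : (Cinv (x - RtoC a - RtoC g * t) * (x - RtoC a - RtoC g * t) = 1)%C) by (apply Cinv_l; auto).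
  set (ui := Cinv (x - RtoC a - RtoC g * t)) in *.
  transitivity (ui * P * ((x - RtoC a - RtoC g * P) - (x - RtoC a - RtoC g * t)))%C.
  - replace (ui * P * ((x - RtoC a - RtoC g * P) - (x - RtoC a - RtoC g * t)))%C
      with ((P * (x - RtoC a - RtoC g * P)) * ui - P * (ui * (x - RtoC a - RtoC g * t)))%C by ring.
    rewrite E1, E2. ring.
  - ring.
Qed.

Lemma norm_step a g x P n : 0 <= g ->
  (x - RtoC a - RtoC g * P <> 0)%C -> P = Cinv (x - RtoC a - RtoC g * P)%C ->
  (x - RtoC a - RtoC g * it a g x n <> 0)%C ->
  Cmod (it a g x (S n) - P)%C = g * Cmod (it a g x n - P)%C * Cmod (it a g x (S n)) * Cmod P.
Proof.
  intros Hg HP EP Hn. rewrite (fix_step a g x P n HP EP Hn).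
  rewrite !Cmod_mult, Cmod_R, Rabs_pos_eq by exact Hg. reflexivity.
Qed.


Lemma Csub_self (x : C) : (x - x = 0)%C.
Proof. ring. Qed.

Lemma Cnz_of_fix (u P : C) : u <> 0%C -> P = Cinv u -> P <> 0%C.
Proof.
  intros Hu EP HP. assert (H := inv_mul_fix u P Hu EP). rewrite HP in H.
  rewrite Cmult_0_l in H. apply C1_nz. symmetry. exact H.
Qed.

Lemma tail_conv (a g : R) (x T : C) (B : R) :
  0 <= g -> (x - RtoC a - RtoC g * T <> 0)%C -> T = Cinv (x - RtoC a - RtoC g * T)%C ->
  g * (Cmod T * Cmod T) < 1 ->
  (forall n, Cmod (it a g x n) <= B) ->
  (forall n, (x - RtoC a - RtoC g * it a g x n <> 0)%C) ->
  conv (it a g x) T.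
Proof.
  intros Hg HT ET Hq HB Hn.
  destruct (Req_dec g 0) as [g0 | gpos].
  - subst g. intros eps Heps. exists 1%nat. intros n Hn1.
    destruct n; [lia|]. simpl it. rewrite ET.
    assert (Heq : forall t : C, (x - RtoC a - RtoC 0 * t = x - RtoC a)%C) by (clear; intros; ring).
    rewrite !Heq, Csub_self.
    rewrite Cmod_0. exact Heps.
  - assert (gp : 0 < g) by lra.
    assert (Tnz : T <> 0%C) by (eapply Cnz_of_fix; eauto).
    assert (gnz : RtoC g <> 0%C) by (intro H; apply gpos; injection H; auto).
    set (Sx := Cinv (RtoC g * T)%C).
    assert (E1 : (T * (x - RtoC a - RtoC g * T) = 1)%C) by (apply inv_mul_fix; auto).
    assert (ExA : (x - RtoC a = RtoC g * T + Cinv T)%C).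
    { assert (H : (x - RtoC a - RtoC g * T = Cinv T)%C).
      { transitivity (Cinv T * (T * (x - RtoC a - RtoC g * T)))%C.
        - field. exact Tnz.
        - rewrite E1. ring. }
      rewrite <- H. ring. }
    assert (ES : (x - RtoC a - RtoC g * Sx = RtoC g * T)%C).
    { rewrite ExA. unfold Sx. field. split; auto. }
    assert (HS : (x - RtoC a - RtoC g * Sx <> 0)%C).
    { rewrite ES. apply Cmult_neq_0; auto. }
    assert (ES' : Sx = Cinv (x - RtoC a - RtoC g * Sx)%C) by (rewrite ES; reflexivity).
    assert (mT : 0 < Cmod T) by (apply Cmod_gt_0; auto).
    assert (mS : Cmod Sx = / (g * Cmod T)).
    { unfold Sx. rewrite Cmod_inv by (apply Cmult_neq_0; auto).
      rewrite Cmod_mult, Cmod_R, Rabs_pos_eq by lra. reflexivity. }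
    assert (mSp : 0 < Cmod Sx) by (rewrite mS; apply Rinv_0_lt_compat; nra).
    assert (Inv : forall n, Cmod (it a g x n - T)%C * Cmod Sx ^ (S n) =
                            Cmod (it a g x n - Sx)%C * Cmod T ^ (S n)).
    { induction n.
      - simpl it. replace (0 - T)%C with (- T)%C by ring. replace (0 - Sx)%C with (- Sx)%C by ring.
        rewrite !Cmod_opp. simpl. ring.
      - rewrite (norm_step a g x T n), (norm_step a g x Sx n) by auto.
        change (S (S n)) with (1 + S n)%nat. rewrite !pow_add.
        transitivity (g * Cmod (it a g x (S n)) * Cmod T * Cmod Sx *
                      (Cmod (it a g x n - T)%C * Cmod Sx ^ (S n))); [ring|].
        rewrite IHn. ring. }
    set (q := Cmod T / Cmod Sx).
    assert (q0 : 0 <= q) by (unfold q; apply Rdiv_le_0_compat; lra).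
    assert (q1 : q < 1).
    { unfold q. rewrite mS. unfold Rdiv. rewrite Rinv_inv. nra. }
    assert (Hd : forall n, Cmod (it a g x n - T)%C = Cmod (it a g x n - Sx)%C * q ^ (S n)).
    { intro n. unfold q, Rdiv. rewrite Rpow_mult_distr, pow_inv.
      assert (Hp : Cmod Sx ^ (S n) <> 0) by (apply pow_nonzero; lra).
      apply (Rmult_eq_reg_r (Cmod Sx ^ (S n))); [|exact Hp].
      rewrite Inv. field. exact Hp. }
    assert (B0 : 0 <= B) by (apply Rle_trans with (Cmod (it a g x 0)); [apply Cmod_ge_0|apply HB]).
    intros eps Heps.
    destruct (pow_lt_1_zero q ltac:(rewrite Rabs_pos_eq; lra) (eps / (B + Cmod Sx + 1)))
      as [N HN].
    { apply Rdiv_lt_0_compat; lra. }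
    exists N. intros n Hn'. rewrite Hd.
    assert (HN' := HN (S n) ltac:(lia)). rewrite Rabs_pos_eq in HN' by (apply pow_le; lra).
    assert (Hds : Cmod (it a g x n - Sx)%C <= B + Cmod Sx).
    { apply Rle_trans with (Cmod (it a g x n) + Cmod (- Sx)%C).
      - apply Cmod_triangle.
      - rewrite Cmod_opp. specialize (HB n). lra. }
    assert (Hpq : 0 <= q ^ S n) by (apply pow_le; lra).
    apply Rle_lt_trans with ((B + Cmod Sx) * q ^ S n).
    + apply Rmult_le_compat_r; lra.
    + apply Rle_lt_trans with ((B + Cmod Sx + 1) * q ^ S n).
      * nra.
      * replace eps with ((B + Cmod Sx + 1) * (eps / (B + Cmod Sx + 1))) by (field; lra).
        apply Rmult_lt_compat_l; lra.
Qed.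


Lemma wrap_conv (beta gamma : R) (x T : C) (s : nat -> C) (m : R) :
  conv s T -> 0 < m -> (forall n, m <= Cmod (x - RtoC beta - RtoC gamma * s n)%C) ->
  (x - RtoC beta - RtoC gamma * T <> 0)%C ->
  conv (fun n => Cinv (x - RtoC beta - RtoC gamma * s n)%C) (Cinv (x - RtoC beta - RtoC gamma * T)%C).
Proof.
  intros Hc Hm Hv Hu eps Heps.
  set (u := (x - RtoC beta - RtoC gamma * T)%C) in *.
  assert (mu : 0 < Cmod u) by (apply Cmod_gt_0; auto).
  destruct (Hc (eps * m * Cmod u / (Rabs gamma + 1))) as [N HN].
  { apply Rdiv_lt_0_compat; [|pose proof (Rabs_pos gamma); lra].
    apply Rmult_lt_0_compat; [apply Rmult_lt_0_compat|]; lra. }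
  exists N. intros n Hn. specialize (HN n Hn). specialize (Hv n).
  set (v := (x - RtoC beta - RtoC gamma * s n)%C) in *.
  assert (vnz : v <> 0%C) by (apply Cmod_gt_0; lra).
  assert (E : (Cinv v - Cinv u = RtoC gamma * (s n - T) * Cinv v * Cinv u)%C).
  { transitivity ((u - v) * Cinv v * Cinv u)%C.
    - field. split; auto.
    - f_equal. f_equal. unfold u, v. ring. }
  rewrite E, !Cmod_mult, Cmod_R, !Cmod_inv by auto.
  set (d := Cmod (s n - T)%C) in *.
  assert (d0 : 0 <= d) by apply Cmod_ge_0.
  pose proof (Rabs_pos gamma) as G0.
  assert (iv : / Cmod v <= / m) by (apply Rinv_le_contravar; lra).
  assert (iv0 : 0 < / Cmod v) by (apply Rinv_0_lt_compat; lra).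
  apply Rle_lt_trans with ((Rabs gamma + 1) * d * / m * / Cmod u).
  - assert (iu : 0 < / Cmod u) by (apply Rinv_0_lt_compat; lra).
    apply Rmult_le_compat_r; [lra|].
    apply Rmult_le_compat; try nra.
  - assert (HN' : d * ((Rabs gamma + 1) / (m * Cmod u)) < eps).
    { replace eps with ((eps * m * Cmod u / (Rabs gamma + 1)) * ((Rabs gamma + 1) / (m * Cmod u)))
        by (field; split; lra).
      apply Rmult_lt_compat_r; [|exact HN].
      apply Rdiv_lt_0_compat; nra. }
    replace ((Rabs gamma + 1) * d * / m * / Cmod u) with (d * ((Rabs gamma + 1) / (m * Cmod u)))
      by (field; split; lra).
    exact HN'.
Qed.

Lemma G_fm_val b c beta gamma (z v : Defs.C) (T : C) (B m : R) :
  0 <= c + gamma ->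
  (toC z - RtoC (b+beta) - RtoC (c+gamma) * T <> 0)%C ->
  T = Cinv (toC z - RtoC (b+beta) - RtoC (c+gamma) * T)%C ->
  (c + gamma) * (Cmod T * Cmod T) < 1 ->
  (forall n, Cmod (it (b+beta) (c+gamma) (toC z) n) <= B) ->
  (forall n, (toC z - RtoC (b+beta) - RtoC (c+gamma) * it (b+beta) (c+gamma) (toC z) n <> 0)%C) ->
  0 < m ->
  (forall n, m <= Cmod (toC z - RtoC beta - RtoC gamma * it (b+beta) (c+gamma) (toC z) n)%C) ->
  (toC z - RtoC beta - RtoC gamma * T <> 0)%C ->
  toC v = Cinv (toC z - RtoC beta - RtoC gamma * T)%C ->
  G_fm b c beta gamma z v.
Proof.
  intros Hg HT ET Hq HB Hn Hm Hlow Hu Hv.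
  assert (Hc := tail_conv _ _ _ _ _ Hg HT ET Hq HB Hn).
  assert (Hw := wrap_conv beta gamma (toC z) T _ m Hc Hm Hlow Hu).
  unfold G_fm, cf_value. intros eps Heps. destruct (Hw eps Heps) as [N HN].
  exists N. intros n Hn'. rewrite Cnorm_toC, toC_sub, cfd_top, Hv. apply HN. exact Hn'.
Qed.


Lemma sq_eq (X q : R) : 0 <= X -> 0 <= q -> X * X = q * q -> X = q.
Proof. intros. apply Rsqr_inj; auto. Qed.

Lemma Csqrt_ex (d : C) : exists s, (s * s = d)%C.
Proof.
  destruct d as [p q].
  set (r := sqrt (p * p + q * q)).
  assert (r0 : 0 <= r) by apply sqrt_pos.
  assert (r2 : r * r = p * p + q * q) by (apply sqrt_sqrt; nra).
  assert (rp1 : -r <= p <= r) by (split; nra).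
  set (A := sqrt ((r + p) / 2)). set (Bv := sqrt ((r - p) / 2)).
  assert (A2 : A * A = (r + p) / 2) by (apply sqrt_sqrt; lra).
  assert (B2 : Bv * Bv = (r - p) / 2) by (apply sqrt_sqrt; lra).
  assert (A0 : 0 <= A) by apply sqrt_pos. assert (B0 : 0 <= Bv) by apply sqrt_pos.
  assert (AB2 : (2 * A * Bv) * (2 * A * Bv) = q * q).
  { replace ((2 * A * Bv) * (2 * A * Bv)) with (4 * (A * A) * (Bv * Bv)) by ring.
    rewrite A2, B2. nra. }
  destruct (Rle_dec 0 q) as [q0 | q0].
  - exists (A, Bv). unfold Cmult; simpl. f_equal.
    + nra.
    + assert (2 * A * Bv = q) by (apply sq_eq; nra). nra.
  - exists (A, - Bv). unfold Cmult; simpl. f_equal.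
    + nra.
    + assert (2 * A * Bv = - q) by (apply sq_eq; nra). nra.
Qed.

Lemma C2nz : (RtoC 2 <> 0)%C.
Proof. intro H. injection H. lra. Qed.

Lemma quad_root (A Bq Cc : C) : A <> 0%C -> exists T, (A * T * T + Bq * T + Cc = 0)%C.
Proof.
  intro HA. destruct (Csqrt_ex (Bq * Bq - RtoC 4 * A * Cc)%C) as [s Hs].
  exists ((- Bq + s) / (RtoC 2 * A))%C.
  transitivity ((s * s - (Bq * Bq - RtoC 4 * A * Cc)) / (RtoC 4 * A))%C.
  - field. exact HA.
  - rewrite Hs, Csub_self. unfold Cdiv. apply Cmult_0_l.
Qed.

Lemma root_fix (u T : C) : (u * T = 1)%C -> u <> 0%C /\ T = Cinv u.
Proof.
  intro H. assert (Hu : u <> 0%C).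
  { intro E. rewrite E, Cmult_0_l in H. apply C1_nz. symmetry; exact H. }
  split; [exact Hu|].
  transitivity (Cinv u * (u * T))%C.
  - field. exact Hu.
  - rewrite H. ring.
Qed.

Lemma im_lin (x t : C) (a g : R) : Im (x - RtoC a - RtoC g * t)%C = Im x - g * Im t.
Proof. destruct x, t. unfold Im, Cminus, Cplus, Copp, Cmult, RtoC; simpl. ring. Qed.

Lemma im_inv (u : C) : Im (Cinv u) = - Im u / (Re u ^ 2 + Im u ^ 2).
Proof. destruct u. reflexivity. Qed.

Lemma im_le_Cmod' (u : C) : Im u <= Cmod u.
Proof. pose proof (im_le_Cmod u). pose proof (Rle_abs (Im u)). lra. Qed.

Lemma im_inv_neg (u : C) : 0 < Im u -> Im (Cinv u) < 0.
Proof.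
  intro H. rewrite im_inv. assert (0 < Re u ^ 2 + Im u ^ 2) by (simpl; nra).
  unfold Rdiv. assert (0 < / (Re u ^ 2 + Im u ^ 2)) by (apply Rinv_0_lt_compat; lra). nra.
Qed.

Lemma uhp_im a g x : 0 <= g -> 0 < Im x -> forall n, Im (it a g x n) <= 0.
Proof.
  intros Hg Hx n. induction n.
  - simpl. lra.
  - simpl it. apply Rlt_le, im_inv_neg. rewrite im_lin. nra.
Qed.

Lemma uhp_den a g x beta gamma n : 0 <= g -> 0 <= gamma -> 0 < Im x ->
  Im x <= Cmod (x - RtoC beta - RtoC gamma * it a g x n)%C.
Proof.
  intros Hg Hga Hx. eapply Rle_trans; [|apply im_le_Cmod'].
  rewrite im_lin. pose proof (uhp_im a g x Hg Hx n). nra.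
Qed.

Lemma uhp_nz a g x beta gamma n : 0 <= g -> 0 <= gamma -> 0 < Im x ->
  (x - RtoC beta - RtoC gamma * it a g x n <> 0)%C.
Proof.
  intros Hg Hga Hx. apply Cmod_gt_0. pose proof (uhp_den a g x beta gamma n Hg Hga Hx). lra.
Qed.

Lemma uhp_bound a g x n : 0 <= g -> 0 < Im x -> Cmod (it a g x n) <= / Im x.
Proof.
  intros Hg Hx. destruct n.
  - simpl. rewrite Cmod_0. apply Rlt_le, Rinv_0_lt_compat. lra.
  - simpl it. rewrite Cmod_inv by (apply uhp_nz; lra).
    apply Rinv_le_contravar; [lra|]. apply uhp_den; lra.
Qed.


Lemma im_subR (x : C) (a : R) : Im (x - RtoC a)%C = Im x.
Proof. destruct x. unfold Im, Cminus, Cplus, Copp, RtoC; simpl. ring. Qed.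

Lemma uhp_fix a g x : 0 <= g -> 0 < Im x ->
  exists T, Im T < 0 /\ (x - RtoC a - RtoC g * T <> 0)%C /\
    T = Cinv (x - RtoC a - RtoC g * T)%C /\ g * (Cmod T * Cmod T) < 1.
Proof.
  intros Hg Hx.
  assert (Hex : exists T, Im T < 0 /\ ((x - RtoC a - RtoC g * T) * T = 1)%C).
  { destruct (Req_dec g 0) as [g0|gp].
    - subst g. exists (Cinv (x - RtoC a)). split.
      + apply im_inv_neg. rewrite im_subR. exact Hx.
      + replace (x - RtoC a - RtoC 0 * Cinv (x - RtoC a))%C with (x - RtoC a)%C by ring.
        apply Cinv_r. apply Cmod_gt_0. pose proof (im_le_Cmod' (x - RtoC a)%C).
        rewrite im_subR in H. lra.
    - assert (gnz : RtoC g <> 0%C) by (intro H; apply gp; injection H; auto).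
      destruct (quad_root (RtoC g) (- (x - RtoC a))%C 1%C gnz) as [T0 H0].
      assert (E0 : ((x - RtoC a - RtoC g * T0) * T0 = 1)%C).
      { transitivity (1 - (RtoC g * T0 * T0 + - (x - RtoC a) * T0 + 1))%C; [ring|].
        rewrite H0. ring. }
      assert (T0nz : T0 <> 0%C).
      { intro E. rewrite E, Cmult_0_r in E0. apply C1_nz. symmetry; exact E0. }
      assert (Im0 : Im T0 <> 0).
      { intro Hi. assert (Hm := f_equal Im E0). rewrite im_mult, im_lin, Hi in Hm.
        simpl in Hm. replace (Re (x - RtoC a - RtoC g * T0)%C * 0 + (Im x - g * 0) * Re T0)
          with (Im x * Re T0) in Hm by ring.
        assert (Re T0 = 0) by (apply (Rmult_eq_reg_l (Im x)); lra).
        apply T0nz. destruct T0 as [r i]. simpl in *. subst. reflexivity. }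
      destruct (Rlt_dec (Im T0) 0) as [Hn|Hp].
      + exists T0. auto.
      + assert (Hp' : 0 < Im T0) by lra.
        exists (Cinv (RtoC g * T0)). split.
        * apply im_inv_neg. rewrite im_scal_l. nra.
        * assert (ExA : (x - RtoC a = RtoC g * T0 + Cinv T0)%C).
          { destruct (root_fix _ _ E0) as [Hu HT].
            assert (U : (x - RtoC a - RtoC g * T0 = Cinv T0)%C).
            { transitivity (Cinv T0 * ((x - RtoC a - RtoC g * T0) * T0))%C.
              - field. exact T0nz.
              - rewrite E0. ring. }
            rewrite <- U. ring. }
          rewrite ExA. field. split; auto. }
  destruct Hex as [T [HiT ET]]. destruct (root_fix _ _ ET) as [Hu HT].
  exists T. split; [exact HiT|]. split; [exact Hu|]. split; [exact HT|].
  set (u := (x - RtoC a - RtoC g * T)%C) in *.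
  assert (Imu : Im u = Im x - g * Im T) by (unfold u; apply im_lin).
  assert (q0 : 0 < Im u) by nra.
  assert (ImT : Im T = - Im u / (Re u ^ 2 + Im u ^ 2)) by (rewrite HT; apply im_inv).
  assert (N0 : 0 < Re u ^ 2 + Im u ^ 2) by (pose proof (pow2_ge_0 (Re u)); pose proof (pow_lt (Im u) 2 q0); lra).
  assert (CT : Cmod T = / Cmod u) by (rewrite HT; apply Cmod_inv; exact Hu).
  assert (Cu : Cmod u * Cmod u = Re u ^ 2 + Im u ^ 2) by (rewrite <- Cmod2_alt; ring).
  rewrite CT. replace (g * (/ Cmod u * / Cmod u)) with (g / (Re u ^ 2 + Im u ^ 2))
    by (rewrite <- Cu; field; apply Rgt_not_eq; apply Cmod_gt_0; exact Hu).
  set (K := g / (Re u ^ 2 + Im u ^ 2)).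
  assert (Hk : g * Im T = - K * Im u) by (rewrite ImT; unfold K; field; lra).
  nra.
Qed.


Lemma nz_of_im (u : C) : 0 < Im u -> u <> 0%C.
Proof. intro H. apply Cmod_gt_0. pose proof (im_le_Cmod' u). lra. Qed.

Lemma Cinv_Cinv' (u : C) : u <> 0%C -> Cinv (Cinv u) = u.
Proof. intro H. field. exact H. Qed.

Lemma part1 b c beta beta' gamma gamma' :
  0 < gamma -> 0 <= gamma' -> - gamma <= c ->
  monotone_conv_eq (G_fm b c beta gamma)
                   (G_fm (b + beta) (c + gamma) beta' gamma')
                   (G_fm b c (beta + beta') (gamma + gamma')).
Proof.
  intros Hga Hga' Hc. unfold monotone_conv_eq. intros z Hz.
  set (x := toC z).
  assert (Hx : 0 < Im x) by exact Hz.
  assert (Hg2 : 0 <= c + gamma + gamma') by lra.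
  destruct (uhp_fix (b + beta + beta') (c + gamma + gamma') x Hg2 Hx) as [T [HiT [Hu [HT Hq]]]].
  set (F := (x - RtoC beta' - RtoC gamma' * T)%C).
  assert (HF : 0 < Im F) by (unfold F; rewrite im_lin; nra).
  assert (HFx : Im x <= Im F) by (unfold F; rewrite im_lin; nra).
  assert (Fnz : F <> 0%C) by (apply nz_of_im; exact HF).
  assert (EqF : (F - RtoC (b + beta) - RtoC (c + gamma) * T =
                 x - RtoC (b + beta + beta') - RtoC (c + gamma + gamma') * T)%C)
    by (unfold F; rewrite !RtoC_plus; ring).
  assert (T2 : 0 <= Cmod T * Cmod T) by (pose proof (Cmod_ge_0 T); nra).
  exists (ofC (Cinv F)), (ofC (Cinv (F - RtoC beta - RtoC gamma * T)%C)).
  split; [|split].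
  - apply (G_fm_val (b + beta) (c + gamma) beta' gamma' z _ T (/ Im x) (Im x)); auto.
    + intro n. apply uhp_bound; auto.
    + intro n. apply uhp_nz; auto.
    + intro n. apply uhp_den; auto.
  - assert (Hz1 : toC (Defs.Cinv (ofC (Cinv F))) = F)
      by (rewrite toC_inv, toC_ofC; apply Cinv_Cinv'; exact Fnz).
    apply (G_fm_val b c beta gamma _ _ T (/ Im F) (Im F)); rewrite ?Hz1.
    + lra.
    + rewrite EqF. exact Hu.
    + rewrite EqF. exact HT.
    + nra.
    + intro n. apply uhp_bound; auto. lra.
    + intro n. apply uhp_nz; auto; lra.
    + exact HF.
    + intro n. apply uhp_den; auto; lra.
    + apply nz_of_im. rewrite im_lin. nra.
    + rewrite toC_ofC. reflexivity.
  - apply (G_fm_val b c (beta + beta') (gamma + gamma') z _ T (/ Im x) (Im x)).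
    + lra.
    + replace (toC z - RtoC (b + (beta + beta')) - RtoC (c + (gamma + gamma')) * T)%C
        with (x - RtoC (b + beta + beta') - RtoC (c + gamma + gamma') * T)%C
        by (unfold x; rewrite !RtoC_plus; ring). exact Hu.
    + replace (toC z - RtoC (b + (beta + beta')) - RtoC (c + (gamma + gamma')) * T)%C
        with (x - RtoC (b + beta + beta') - RtoC (c + gamma + gamma') * T)%C
        by (unfold x; rewrite !RtoC_plus; ring). exact HT.
    + replace (c + (gamma + gamma')) with (c + gamma + gamma') by ring. exact Hq.
    + intro n. apply uhp_bound; auto. lra.
    + intro n. apply uhp_nz; auto; lra.
    + exact Hx.
    + intro n. apply uhp_den; auto; lra.
    + apply nz_of_im. rewrite im_lin. change (Im (toC z)) with (Im x). nra.
    + rewrite toC_ofC. f_equal. unfold F, x. rewrite !RtoC_plus. ring.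
Qed.


Lemma other_root (X T : C) (g : R) : ((X - RtoC g * T) * T = 1)%C -> g <> 0 ->
  ((X - RtoC g * Cinv (RtoC g * T)) * Cinv (RtoC g * T) = 1)%C.
Proof.
  intros E gp.
  assert (gnz : RtoC g <> 0%C) by (intro H; apply gp; injection H; auto).
  assert (T0nz : T <> 0%C).
  { intro H. rewrite H, Cmult_0_r in E. apply C1_nz. symmetry; exact E. }
  assert (U : (X - RtoC g * T = Cinv T)%C).
  { transitivity (Cinv T * ((X - RtoC g * T) * T))%C.
    - field. exact T0nz.
    - rewrite E. ring. }
  replace X with (RtoC g * T + Cinv T)%C by (rewrite <- U; ring).
  field. split; auto.
Qed.

Lemma Cmod_Rmul (g : R) (t : C) : 0 <= g -> Cmod (RtoC g * t)%C = g * Cmod t.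
Proof. intro H. rewrite Cmod_mult, Cmod_R, Rabs_pos_eq; auto. Qed.

Lemma Cmod_Rmul' (g : R) (t : C) : Cmod (RtoC g * t)%C = Rabs g * Cmod t.
Proof. rewrite Cmod_mult, Cmod_R. reflexivity. Qed.

Lemma R_bound b c (W R : C) :
  0 < Cmod W -> Cmod W * (4 * (20 + Rabs b + Rabs c)) < 1 ->
  ((Cinv W - RtoC b - RtoC c * R) * R = 1)%C -> Rabs c * (Cmod R * Cmod R) <= 1 ->
  Cmod R <= 2 * Cmod W.
Proof.
  intros Hw Hs E Hc.
  assert (Wnz : W <> 0%C) by (apply Cmod_gt_0; exact Hw).
  set (Y := Cmod (Cinv W)).
  assert (HY : Y * Cmod W = 1) by (unfold Y; rewrite Cmod_inv by exact Wnz; field; lra).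
  set (V := (Cinv W - RtoC b - RtoC c * R)%C) in *.
  assert (HV : Y <= Cmod V + Rabs b + Rabs c * Cmod R).
  { unfold Y. replace (Cinv W) with (V + (RtoC b + RtoC c * R))%C by (unfold V; ring).
    eapply Rle_trans; [apply Cmod_triangle|].
    pose proof (Cmod_triangle (RtoC b) (RtoC c * R)%C).
    rewrite Cmod_R, Cmod_Rmul' in H. lra. }
  assert (H1 : Cmod V * Cmod R = 1) by (rewrite <- Cmod_mult, E; apply Cmod_1).
  assert (R0 : 0 <= Cmod R) by apply Cmod_ge_0.
  pose proof (Rabs_pos b). pose proof (Rabs_pos c).
  assert (cR : Rabs c * Cmod R <= 1 + Rabs c).
  { destruct (Rle_dec 1 (Cmod R)); nra. }
  assert (YD : Y * Cmod W * (4 * (20 + Rabs b + Rabs c)) < Y) by nra.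
  rewrite HY in YD.
  assert (Cmod R * (Y / 2) <= 1) by nra.
  nra.
Qed.

Lemma Rex b c (W : C) :
  0 < Cmod W -> Cmod W * (4 * (20 + Rabs b + Rabs c)) < 1 ->
  exists R, ((Cinv W - RtoC b - RtoC c * R) * R = 1)%C /\ Cmod R <= 2 * Cmod W.
Proof.
  intros Hw Hs.
  assert (Wnz : W <> 0%C) by (apply Cmod_gt_0; exact Hw).
  assert (Hex : exists R, ((Cinv W - RtoC b - RtoC c * R) * R = 1)%C /\ Rabs c * (Cmod R * Cmod R) <= 1).
  { destruct (Req_dec c 0) as [c0|cnz].
    - subst c. 
      assert (Vnz : (Cinv W - RtoC b <> 0)%C).
      { intro H. assert (Hm := f_equal Cmod H). rewrite Cmod_0 in Hm.
        pose proof (Cmod_rev (Cinv W) (RtoC b)). rewrite Cmod_R, Cmod_inv in H0 by exact Wnz.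
        rewrite Hm in H0. pose proof (Rabs_pos b).
        assert (Y : / Cmod W * Cmod W = 1) by (field; lra).
        assert (Y0 : 0 < / Cmod W) by (apply Rinv_0_lt_compat; lra).
        rewrite Rabs_R0 in Hs.
        assert (/ Cmod W * (Cmod W * (4 * (20 + Rabs b + 0))) < / Cmod W * 1)
          by (apply Rmult_lt_compat_l; lra).
        nra. }
      exists (Cinv (Cinv W - RtoC b)). split.
      + replace (Cinv W - RtoC b - RtoC 0 * Cinv (Cinv W - RtoC b))%C with (Cinv W - RtoC b)%C by ring.
        apply Cinv_r. exact Vnz.
      + rewrite Rabs_R0. lra.
    - assert (gnz : RtoC c <> 0%C) by (intro H; apply cnz; injection H; auto).
      destruct (quad_root (RtoC c) (- (Cinv W - RtoC b))%C 1%C gnz) as [T0 H0].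
      assert (E0 : ((Cinv W - RtoC b - RtoC c * T0) * T0 = 1)%C).
      { transitivity (1 - (RtoC c * T0 * T0 + - (Cinv W - RtoC b) * T0 + 1))%C; [ring|].
        rewrite H0. ring. }
      destruct (Rle_dec (Rabs c * (Cmod T0 * Cmod T0)) 1) as [Hle|Hgt].
      + exists T0. auto.
      + exists (Cinv (RtoC c * T0)). split.
        * apply other_root; auto.
        * assert (T0nz : T0 <> 0%C).
          { intro H. rewrite H, Cmod_0 in Hgt. lra. }
          rewrite Cmod_inv by (apply Cmult_neq_0; auto).
          rewrite Cmod_Rmul'.
          assert (0 < Rabs c) by (apply Rabs_pos_lt; auto).
          assert (0 < Cmod T0) by (apply Cmod_gt_0; auto).
          replace (Rabs c * (/ (Rabs c * Cmod T0) * / (Rabs c * Cmod T0)))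
            with (/ (Rabs c * (Cmod T0 * Cmod T0))) by (field; lra).
          rewrite <- Rinv_1. apply Rinv_le_contravar; lra. }
  destruct Hex as [R [E Hc]]. exists R. split; auto.
  apply (R_bound b c W R); auto.
Qed.


Lemma large_den a g x K t : 0 <= g -> 0 < K -> 4 * g <= K * K -> K <= Cmod (x - RtoC a)%C ->
  Cmod t <= 2 / K -> K / 2 <= Cmod (x - RtoC a - RtoC g * t)%C.
Proof.
  intros Hg HK HgK Hx Ht.
  pose proof (Cmod_rev (x - RtoC a)%C (RtoC g * t)%C) as H. rewrite Cmod_Rmul in H by exact Hg.
  assert (g * (2 / K) <= K / 2).
  { replace (g * (2 / K)) with ((4 * g) * / (2 * K)) by (field; lra).
    replace (K / 2) with ((K * K) * / (2 * K)) by (field; lra).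
    apply Rmult_le_compat_r; [apply Rlt_le, Rinv_0_lt_compat; lra | lra]. }
  assert (g * Cmod t <= g * (2 / K)) by (apply Rmult_le_compat_l; auto).
  lra.
Qed.

Lemma large_it a g x K : 0 <= g -> 0 < K -> 4 * g <= K * K -> K <= Cmod (x - RtoC a)%C ->
  forall n, Cmod (it a g x n) <= 2 / K.
Proof.
  intros Hg HK HgK Hx n. induction n.
  - simpl. rewrite Cmod_0. apply Rlt_le, Rdiv_lt_0_compat; lra.
  - simpl it. assert (Hd := large_den a g x K _ Hg HK HgK Hx IHn).
    rewrite Cmod_inv by (apply Cmod_gt_0; lra).
    replace (2 / K) with (/ (K / 2)) by (field; lra).
    apply Rinv_le_contravar; lra.
Qed.

Lemma free_G b c gam (z w : Defs.C) (R : C) : -1 <= c -> 1 <= gam <= 2 ->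
  toC z = (RtoC gam * R + Cinv (toC w))%C ->
  0 < Cmod (toC w) -> Cmod (toC w) * (4 * (20 + Rabs b + Rabs c)) < 1 ->
  ((Cinv (toC w) - RtoC b - RtoC c * R) * R = 1)%C -> Cmod R <= 2 * Cmod (toC w) ->
  G_fm b c 0 gam z w.
Proof.
  intros Hc Hgam Hz Hw Hs E HR.
  set (W := toC w) in *. set (x := toC z) in *.
  set (rho := Cmod W) in *.
  set (D := 20 + Rabs b + Rabs c) in *.
  assert (Wnz : W <> 0%C) by (apply Cmod_gt_0; exact Hw).
  set (Y := Cmod (Cinv W)).
  assert (HY : Y * rho = 1) by (unfold Y, rho; rewrite Cmod_inv by exact Wnz; field; apply Rgt_not_eq; exact Hw).
  pose proof (Rabs_pos b) as Hb. pose proof (Rabs_pos c) as Hc'.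
  assert (HD : 20 <= D) by (unfold D; lra).
  assert (YD : 4 * D < Y) by (assert (Y * (rho * (4 * D)) < Y * 1) by (apply Rmult_lt_compat_l; nra); nra).
  assert (rho1 : rho * 80 < 1) by nra.
  assert (R0 : 0 <= Cmod R) by apply Cmod_ge_0.
  assert (Ex : (x - RtoC (b + 0) - RtoC (c + gam) * R = Cinv W - RtoC b - RtoC c * R)%C)
    by (rewrite Hz, !RtoC_plus; ring).
  assert (Ex0 : (x - RtoC 0 - RtoC gam * R = Cinv W)%C) by (rewrite Hz; ring).
  destruct (root_fix _ _ E) as [Vnz HV].
  set (K := Y / 2).
  assert (Hxb : K <= Cmod (x - RtoC (b + 0))%C).
  { replace (x - RtoC (b + 0))%C with (Cinv W - (RtoC b - RtoC gam * R))%C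
      by (rewrite Hz, RtoC_plus; ring).
    pose proof (Cmod_rev (Cinv W) (RtoC b - RtoC gam * R)%C).
    pose proof (Cmod_triangle (RtoC b) (- (RtoC gam * R))%C).
    rewrite Cmod_opp, Cmod_Rmul, Cmod_R in H0 by lra.
    replace (RtoC b + - (RtoC gam * R))%C with (RtoC b - RtoC gam * R)%C in H0 by ring.
    fold Y in H. unfold K.
    assert (gam * Cmod R <= 2 * (2 * rho)) by (apply Rmult_le_compat; lra).
    assert (D = 20 + Rabs b + Rabs c) by reflexivity.
    lra. }
  assert (HK : 0 < K) by (unfold K; lra).
  assert (HgK : 4 * (c + gam) <= K * K).
  { unfold K. assert (c + gam <= D) by (unfold D; pose proof (Rle_abs c); lra). nra. }
  assert (Hg : 0 <= c + gam) by lra.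
  assert (Hit := large_it (b + 0) (c + gam) x K Hg HK HgK Hxb).
  apply (G_fm_val b c 0 gam z w R (2 / K) (Y / 2)).
  all: try change (toC z) with x.
  all: try change (toC w) with W.
  - exact Hg.
  - rewrite Ex. exact Vnz.
  - rewrite Ex. exact HV.
  - assert (Cmod R * Cmod R <= 4 * (rho * rho)) by nra.
    assert (c + gam <= D) by (unfold D; pose proof (Rle_abs c); lra).
    assert (D * (4 * (rho * rho)) < 1) by nra.
    nra.
  - exact Hit.
  - intro n. apply Cmod_gt_0. pose proof (large_den _ _ _ _ _ Hg HK HgK Hxb (Hit n)). lra.
  - lra.
  - intro n. specialize (Hit n).
    pose proof (Cmod_rev (x - RtoC 0)%C (RtoC gam * it (b + 0) (c + gam) x n)%C) as H1.
    rewrite Cmod_Rmul in H1 by lra.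
    assert (Hx0 : Y - 4 * rho <= Cmod (x - RtoC 0)%C).
    { replace (x - RtoC 0)%C with (RtoC gam * R + Cinv W)%C by (rewrite Hz; ring).
      pose proof (Cmod_rev (Cinv W) (- (RtoC gam * R))%C) as H2.
      rewrite Cmod_opp, Cmod_Rmul in H2 by lra.
      replace (Cinv W - - (RtoC gam * R))%C with (RtoC gam * R + Cinv W)%C in H2 by ring.
      fold Y in H2.
      assert (gam * Cmod R <= 2 * (2 * rho)) by (apply Rmult_le_compat; lra).
      lra. }
    assert (rhoY : rho = / Y).
    { apply (Rmult_eq_reg_l Y); [rewrite Rinv_r by lra; lra | lra]. }
    assert (2 / K = 4 * rho) by (unfold K; rewrite rhoY; field; lra).
    assert (gam * Cmod (it (b + 0) (c + gam) x n) <= 2 * (4 * rho)).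
    { apply Rmult_le_compat; try lra. apply Cmod_ge_0. }
    lra.
  - rewrite Ex0. exact (Cnz_of_fix W (Cinv W) Wnz eq_refl).
  - rewrite Ex0. symmetry. apply Cinv_Cinv'. exact Wnz.
Qed.


Lemma free_part b c : -1 <= c ->
  free_conv_eq (G_fm b c 0 1) (G_fm b c 0 1) (G_fm b c 0 2).
Proof.
  intro Hc.
  set (D := 20 + Rabs b + Rabs c).
  pose proof (Rabs_pos b). pose proof (Rabs_pos c).
  assert (HD : 20 <= D) by (unfold D; lra).
  assert (Hsel : forall W : C, exists R : C, 0 < Cmod W -> Cmod W * (4 * D) < 1 ->
      ((Cinv W - RtoC b - RtoC c * R) * R = 1)%C /\ Cmod R <= 2 * Cmod W).
  { intro W. destruct (Rlt_dec 0 (Cmod W)) as [h1|h1];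
      [|exists 0%C; intros; lra].
    destruct (Rlt_dec (Cmod W * (4 * D)) 1) as [h2|h2]; [|exists 0%C; intros; lra].
    destruct (Rex b c W h1 h2) as [R HR]. exists R. intros; exact HR. }
  set (Rv := fun W => proj1_sig (constructive_indefinite_description _ (Hsel W))).
  assert (HRv : forall W, 0 < Cmod W -> Cmod W * (4 * D) < 1 ->
      ((Cinv W - RtoC b - RtoC c * Rv W) * Rv W = 1)%C /\ Cmod (Rv W) <= 2 * Cmod W).
  { intro W. exact (proj2_sig (constructive_indefinite_description _ (Hsel W))). }
  exists (/ (4 * D)), 1. split; [apply Rinv_0_lt_compat; lra|].
  exists (fun w => ofC (Rv (toC w))), (fun w => ofC (Rv (toC w))).
  intros w [Hw1 Hw2]. rewrite Cnorm_toC in Hw1, Hw2.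
  assert (Hs : Cmod (toC w) * (4 * D) < 1).
  { apply (Rmult_lt_compat_r (4 * D)) in Hw2; [|lra].
    rewrite Rinv_l in Hw2 by lra. exact Hw2. }
  destruct (HRv (toC w) Hw1 Hs) as [E HR].
  assert (Hn : Defs.Cnorm (ofC (Rv (toC w))) <= 1).
  { rewrite Cnorm_toC, toC_ofC. assert (Cmod (toC w) * 80 < 1) by nra. lra. }
  split; [exact Hn|]. split; [exact Hn|]. split; [|split].
  - apply (free_G b c 1 _ w (Rv (toC w))); auto; try lra.
    rewrite toC_add, toC_ofC, toC_inv. ring.
  - apply (free_G b c 1 _ w (Rv (toC w))); auto; try lra.
    rewrite toC_add, toC_ofC, toC_inv. ring.
  - apply (free_G b c 2 _ w (Rv (toC w))); auto; try lra.
    rewrite !toC_add, toC_ofC, toC_inv. ring.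
Qed.

End W.

Theorem mainTheorem11 :
  (forall b c beta beta' gamma gamma' : R,
     0 < gamma -> 0 <= gamma' -> - gamma <= c ->
     monotone_conv_eq (G_fm b c beta gamma)
                      (G_fm (b + beta) (c + gamma) beta' gamma')
                      (G_fm b c (beta + beta') (gamma + gamma')))
  /\
  (forall b c : R, -1 <= c ->
     monotone_conv_eq (G_fm b c 0 1) (G_fm b (c + 1) 0 1) (G_fm b c 0 2) /\
     free_conv_eq (G_fm b c 0 1) (G_fm b c 0 1) (G_fm b c 0 2)).
Proof.
  split.
  - intros. apply W.part1; auto.
  - intros b c Hc. split.
    + pose proof (W.part1 b c 0 0 1 1 ltac:(lra) ltac:(lra) ltac:(lra)) as H.
      replace (b + 0) with b in H by ring. replace (0 + 0) with 0 in H by ring.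
      replace (1 + 1) with 2 in H by ring. exact H.
    + apply W.free_part; auto.
Qed.
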